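(* For any real $\lambda$ and $\theta$ and any $0<x<\pi/2$, \[ \left|\lambda\int_0^x\frac{\cos(\lambda y-\theta)}{\cos y}\,dy-\sin\theta\right|<\frac{1}{\cos x}. \] *)

(* Defs.v *)
From Stdlib Require Import Reals.
From Coquelicot Require Import Coquelicot.

(* Main.v *)
Require Import Defs.
From Stdlib Require Import Reals Lra Psatz.
From Coquelicot Require Import Coquelicot.
Open Scope R_scope.
Definition ch s := (exp s + exp (- s)) / 2.
Definition sh s := (exp s - exp (- s)) / 2.
Definition al t s := cos t * ch s.
Definition be t s := sin t * sh s.
Definition DD t s := al t s * al t s + be t s * be t s.
Definition uu l th t s := exp (- (l * s)) * (cos (l*t - th) * al t s - sin (l*t-th) * be t s) / DD t s.
Definition vv l th t s := exp (- (l * s)) * (sin (l*t - th) * al t s + cos (l*t-th) * be t s) / DD t s.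
Definition us l th t s :=
  ((- l * exp (- (l * s)) * (cos (l*t - th) * al t s - sin (l*t-th) * be t s)
    + exp (- (l * s)) * (cos (l*t - th) * (cos t * sh s) - sin (l*t-th) * (sin t * ch s))) * DD t s
   - exp (- (l * s)) * (cos (l*t - th) * al t s - sin (l*t-th) * be t s)
     * (2 * al t s * (cos t * sh s) + 2 * be t s * (sin t * ch s))) / (DD t s * DD t s).
Definition vt l th t s :=
  ((exp (- (l * s)) * (l * cos (l*t - th) * al t s + sin (l*t-th) * (- sin t * ch s)
     - l * sin (l*t-th) * be t s + cos (l*t - th) * (cos t * sh s))) * DD t s
   - exp (- (l * s)) * (sin (l*t - th) * al t s + cos (l*t-th) * be t s)
     * (2 * al t s * (- sin t * ch s) + 2 * be t s * (cos t * sh s))) / (DD t s * DD t s).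

Lemma CR l th t s : DD t s <> 0 -> us l th t s = - vt l th t s.
Proof. intros H. unfold us, vt. field_simplify; auto. unfold DD, al, be in *. field. auto. Qed.

Lemma u_ds l th t s : DD t s <> 0 -> is_derive (fun z => uu l th t z) s (us l th t s).
Proof. intros H. unfold uu, us. unfold DD, al, be, ch, sh in *. auto_derive. auto.
 field. contradict H. nra. Qed.
Lemma v_dt l th t s : DD t s <> 0 -> is_derive (fun z => vv l th z s) t (vt l th t s).
Proof. intros H. unfold vv, vt. unfold DD, al, be, ch, sh in *. auto_derive. auto.
 unfold Rminus. field. contradict H. nra. Qed.
Lemma cpt_cos x : continuity_pt cos x. Proof. apply continuity_cos. Qed.
Lemma cpt_sin x : continuity_pt sin x. Proof. apply continuity_sin. Qed.
Lemma cpt_exp x : continuity_pt exp x. Proof. apply derivable_continuous_pt, derivable_pt_exp. Qed.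
Ltac c2d := repeat first [ apply continuity_2d_pt_id1 | apply continuity_2d_pt_id2 | apply continuity_2d_pt_const
  | apply continuity_2d_pt_plus | apply continuity_2d_pt_minus | apply continuity_2d_pt_mult | apply continuity_2d_pt_opp
  | apply (continuity_1d_2d_pt_comp cos); [apply cpt_cos|]
  | apply (continuity_1d_2d_pt_comp sin); [apply cpt_sin|]
  | apply (continuity_1d_2d_pt_comp exp); [apply cpt_exp|]
  | apply continuity_2d_pt_inv ].

Lemma us_c2d l th S t : DD t S <> 0 -> continuity_2d_pt (fun S t => us l th t S) S t.
Proof. intros H. unfold us. unfold Rdiv. c2d.
 all: try (apply Rmult_integral_contrapositive_currified; assumption).
 all: unfold DD, al, be, ch, sh, Rdiv, Rminus; c2d. Qed.
Lemma c2d_proj2 f x y : continuity_2d_pt f x y -> continuous (fun v => f x v) y.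
Proof. intros H. apply continuity_pt_filterlim. intros eps Heps.
 destruct (H (mkposreal eps Heps)) as [d Hd]. exists d; split; [apply cond_pos|].
 intros v [_ Hv]. apply (Hd x v). rewrite Rminus_diag, Rabs_R0; apply cond_pos. exact Hv. Qed.
Lemma c2d_proj1 f x y : continuity_2d_pt f x y -> continuous (fun u => f u y) x.
Proof. intros H. apply continuity_pt_filterlim. intros eps Heps.
 destruct (H (mkposreal eps Heps)) as [d Hd]. exists d; split; [apply cond_pos|].
 intros v [_ Hv]. apply (Hd v y). exact Hv. rewrite Rminus_diag, Rabs_R0; apply cond_pos. Qed.
Lemma DD_c2d S t : continuity_2d_pt (fun S t => DD t S) S t.
Proof. unfold DD, al, be, ch, sh, Rdiv, Rminus; c2d. Qed.
Lemma uu_c2d l th S t : DD t S <> 0 -> continuity_2d_pt (fun S t => uu l th t S) S t.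
Proof. intros H. unfold uu. unfold Rdiv. c2d. all: try assumption.
 all: unfold DD, al, be, ch, sh, Rdiv, Rminus; c2d. Qed.
Lemma vv_c2d l th S t : DD t S <> 0 -> continuity_2d_pt (fun S t => vv l th t S) S t.
Proof. intros H. unfold vv. unfold Rdiv. c2d. all: try assumption.
 all: unfold DD, al, be, ch, sh, Rdiv, Rminus; c2d. Qed.
Lemma vt_c2d l th S t : DD t S <> 0 -> continuity_2d_pt (fun S t => vt l th t S) S t.
Proof. intros H. unfold vt. unfold Rdiv. c2d.
 all: try (apply Rmult_integral_contrapositive_currified; assumption).
 all: unfold DD, al, be, ch, sh, Rdiv, Rminus; c2d. Qed.
Lemma ch_pos s : 0 < ch s. Proof. unfold ch. pose proof (exp_pos s); pose proof (exp_pos (-s)); lra. Qed.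
Lemma DD_pos t s : 0 < cos t -> 0 < DD t s.
Proof. intros H. pose proof (ch_pos s). unfold DD, al, be.
 assert (0 < cos t * ch s) by (apply Rmult_lt_0_compat; auto). nra. Qed.
Lemma ident l th x S : 0 <= x -> (forall t, 0 <= t <= x -> 0 < cos t) ->
  RInt (fun t => uu l th t 0) 0 x =
  RInt (fun t => uu l th t S) 0 x + RInt (fun s => vv l th x s - vv l th 0 s) 0 S.
Proof.
  intros Hx Hc.
  assert (HDn : forall t s, 0 <= t <= x -> DD t s <> 0).
  { intros t s Ht. apply Rgt_not_eq, DD_pos, Hc, Ht. }
  assert (Hv : forall s, continuous (fun s => vv l th x s - vv l th 0 s) s).
  { intros s. apply (continuous_minus (fun s => vv l th x s) (fun s => vv l th 0 s)).
    apply (c2d_proj1 (fun S t => vv l th t S)), vv_c2d, HDn; lra.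
    apply (c2d_proj1 (fun S t => vv l th t S)), vv_c2d, HDn; lra. }
  assert (Hu : forall S, ex_RInt (fun t => uu l th t S) 0 x).
  { intros S'. apply (@ex_RInt_continuous R_CompleteNormedModule). rewrite Rmin_left, Rmax_right by lra. intros t Ht.
    apply (c2d_proj2 (fun S t => uu l th t S)), uu_c2d, HDn; lra. }
  set (L := fun S => RInt (fun t => uu l th t S) 0 x + RInt (fun s => vv l th x s - vv l th 0 s) 0 S).
  assert (HD : forall S, is_derive L S 0).
  { intros S'. unfold L.
    assert (E : RInt (fun t => Derive (fun u => uu l th t u) S') 0 x = - (vv l th x S' - vv l th 0 S')).
    { rewrite (RInt_ext _ (fun t => - vt l th t S')).
      2:{ rewrite Rmin_left, Rmax_right by lra. intros t Ht.
          transitivity (us l th t S'). apply is_derive_unique, u_ds, HDn; lra.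
          apply CR, HDn; lra. }
      apply is_RInt_unique.
      replace (- (vv l th x S' - vv l th 0 S')) with (minus (- vv l th x S') (- vv l th 0 S'))
        by (unfold minus, plus, opp; simpl; ring).
      apply (is_RInt_derive (fun t => - vv l th t S')).
      - rewrite Rmin_left, Rmax_right by lra. intros t Ht.
        apply (is_derive_opp (fun t => vv l th t S')), v_dt, HDn; lra.
      - rewrite Rmin_left, Rmax_right by lra. intros t Ht.
        apply (continuous_opp (fun t => vt l th t S')).
        apply (c2d_proj2 (fun S t => vt l th t S)), vt_c2d, HDn; lra. }
    assert (H2 : is_derive (fun S => RInt (fun t => uu l th t S) 0 x + RInt (fun s => vv l th x s - vv l th 0 s) 0 S) S'
       (RInt (fun t => Derive (fun u => uu l th t u) S') 0 x + (vv l th x S' - vv l th 0 S'))).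
    apply (is_derive_plus (fun S => RInt (fun t => uu l th t S) 0 x)).
    - apply (is_derive_RInt_param (fun S t => uu l th t S)).
      + apply filter_forall. intros y t Ht. rewrite Rmin_left, Rmax_right in Ht by lra.
        eexists. apply u_ds, HDn; lra.
      + intros t Ht. rewrite Rmin_left, Rmax_right in Ht by lra.
        apply continuity_2d_pt_ext_loc with (f := fun S t => us l th t S).
        * destruct (continuity_2d_pt_neq_0 _ _ _ (DD_c2d S' t) (HDn t S' ltac:(lra))) as [d Hd].
          exists d. intros u v Hu1 Hv1. symmetry. apply is_derive_unique, u_ds, Hd; auto.
        * apply us_c2d, HDn; lra.
      + apply filter_forall. intros y. apply Hu.
    - apply (is_derive_RInt (fun s => vv l th x s - vv l th 0 s) (fun S => RInt (fun s => vv l th x s - vv l th 0 s) 0 S) 0).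
      + apply filter_forall. intros b. apply (@RInt_correct R_CompleteNormedModule). apply (@ex_RInt_continuous R_CompleteNormedModule). intros; apply Hv.
      + apply Hv.
    - rewrite E in H2. replace (- (vv l th x S' - vv l th 0 S') + (vv l th x S' - vv l th 0 S')) with 0 in H2 by ring.
      exact H2. }
  assert (HI := is_RInt_derive L (fun _ => 0) 0 S ltac:(intros; apply HD) ltac:(intros; apply continuous_const)).
  apply is_RInt_unique in HI. rewrite RInt_const in HI.
  assert (H1' : (S - 0) * 0 = L S - L 0) by exact HI.
  assert (H1 : L S - L 0 = 0) by lra.
  assert (H0 : RInt (fun s => vv l th x s - vv l th 0 s) 0 0 = 0) by (rewrite RInt_point; reflexivity).
  unfold L in H1. rewrite H0 in H1. lra.
Qed.
Lemma alg1 c h a : 0 < c < 1 -> 1 <= h -> c <= a -> a*a = h*h-1+c*c -> c*h <= a*(h*(1-c)+c).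
Proof. intros Hc Hh Ha E.
 assert (H1 : (a*(h*(1-c)+c) - c*h)*(h+a) = a*h*(1-c)*(h+a) - c*(1-c*c)) by nra.
 assert (H2 : a*h*(h+a) >= c*(1+c)).
 { assert (a*h >= c) by nra. nra. }
 assert (H3 : (a*(h*(1-c)+c) - c*h)*(h+a) >= 0) by nra.
 assert (0 < h + a) by lra.
 nra. Qed.
Lemma abs_le_of_sq N a : 0 <= a -> N*N <= a*a -> Rabs N <= a.
Proof. intros. unfold Rabs; destruct Rcase_abs; nra. Qed.

Lemma div_bound E N D M : 0 <= E -> 0 < D -> Rabs N <= M * D -> Rabs (E * N / D) <= E * M.
Proof. intros HE HD H. unfold Rdiv. rewrite !Rabs_mult, Rabs_inv, (Rabs_right E) by lra.
 rewrite (Rabs_right D) by lra. rewrite Rmult_assoc. apply Rmult_le_compat_l; auto.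
 apply (Rmult_le_reg_r D); auto. rewrite Rmult_assoc, Rinv_l by lra. lra. Qed.

Lemma ptw_u E p q ct st h k : ct*ct + st*st = 1 -> h*h - k*k = 1 -> 0 < k -> p*p+q*q = 1 -> 0 <= E ->
  Rabs (E * (p*(ct*h) - q*(st*k)) / ((ct*h)*(ct*h) + (st*k)*(st*k))) <= E * (1 / k).
Proof. intros H1 H2 Hk H3 HE.
 set (D := (ct*h)*(ct*h) + (st*k)*(st*k)).
 assert (HDk : k*k <= D) by (unfold D; nra).
 assert (HN : (p*(ct*h) - q*(st*k))*(p*(ct*h) - q*(st*k)) <= D).
 { assert (D - (p*(ct*h) - q*(st*k))*(p*(ct*h) - q*(st*k)) = (p*(st*k) + q*(ct*h))*(p*(st*k) + q*(ct*h))) by (unfold D; nra).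
   pose proof (Rle_0_sqr (p*(st*k) + q*(ct*h))). unfold Rsqr in *. lra. }
 apply div_bound; auto. nra.
 apply abs_le_of_sq. apply Rmult_le_pos; [|nra]. unfold Rdiv; rewrite Rmult_1_l; left; apply Rinv_0_lt_compat; auto.
 replace (1 / k * D * (1 / k * D)) with (D * (D / (k*k))) by (field; lra).
 apply Rle_trans with (D * 1). lra. apply Rmult_le_compat_l. nra.
 apply (Rmult_le_reg_r (k*k)). nra. unfold Rdiv. rewrite Rmult_assoc, Rinv_l by nra. lra. Qed.

Lemma ptw_v E p q c sn h k : 0 < c < 1 -> c*c + sn*sn = 1 -> h*h - k*k = 1 -> 1 <= h -> p*p+q*q = 1 -> 0 <= E ->
  Rabs (E * (p*(c*h) + q*(sn*k)) / ((c*h)*(c*h) + (sn*k)*(sn*k))) <= E * ((1/c - 1) + 1/h).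
Proof. intros Hc H1 H2 Hh H3 HE.
 set (D := (c*h)*(c*h) + (sn*k)*(sn*k)).
 assert (HD : D = h*h - 1 + c*c) by (unfold D; nra).
 assert (HN : (p*(c*h) + q*(sn*k))*(p*(c*h) + q*(sn*k)) <= D).
 { assert (D - (p*(c*h) + q*(sn*k))*(p*(c*h) + q*(sn*k)) = (p*(sn*k) - q*(c*h))*(p*(sn*k) - q*(c*h))) by (unfold D; nra).
   pose proof (Rle_0_sqr (p*(sn*k) - q*(c*h))). unfold Rsqr in *. lra. }
 set (a := sqrt D).
 assert (Ha : a * a = D) by (apply sqrt_sqrt; nra).
 assert (Ha0 : 0 <= a) by apply sqrt_pos.
 assert (Hca : c <= a). { assert (c*c <= D) by (unfold D; nra). destruct (Rle_lt_dec c a); auto. nra. }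
 assert (Hal := alg1 c h a Hc Hh Hca ltac:(lra)).
 apply div_bound; auto. nra.
 replace ((1/c - 1 + 1/h) * D) with (a * ((h*(1-c)+c)/(c*h) * a)) by (rewrite <- Ha; field; lra).
 assert (HX : 1 <= (h*(1-c)+c)/(c*h) * a).
 { apply (Rmult_le_reg_l (c*h)). nra.
   replace (c * h * ((h * (1 - c) + c) / (c * h) * a)) with (a * (h * (1 - c) + c)) by (field; lra). lra. }
 apply abs_le_of_sq. nra.
 set (X := (h*(1-c)+c)/(c*h) * a) in *.
 assert (a <= a * X) by nra.
 assert (a * a <= (a*X)*(a*X)) by nra. nra.
Qed.

Lemma cs1 a : cos a * cos a + sin a * sin a = 1.
Proof. pose proof (sin2_cos2 a). unfold Rsqr in H. lra. Qed.
Lemma expm s : exp s * exp (- s) = 1.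
Proof. rewrite <- exp_plus. replace (s + - s) with 0 by ring. apply exp_0. Qed.
Lemma chsh s : ch s * ch s - sh s * sh s = 1.
Proof. unfold ch, sh. pose proof (expm s). nra. Qed.
Lemma ch_ge1 s : 1 <= ch s.
Proof. pose proof (chsh s). pose proof (ch_pos s). nra. Qed.
Lemma sh_ge S : 0 < S -> S / 2 <= sh S.
Proof. intros H. unfold sh. pose proof (exp_ineq1 S ltac:(lra)).
 assert (exp (-S) < exp 0) by (apply exp_increasing; lra). rewrite exp_0 in H1. lra. Qed.

Lemma RInt_minusR (f g : R -> R) a b : ex_RInt f a b -> ex_RInt g a b -> RInt (fun x => f x - g x) a b = RInt f a b - RInt g a b.
Proof. intros. exact (@RInt_minus R_CompleteNormedModule f g a b H H0). Qed.
Lemma RInt_plusR (f g : R -> R) a b : ex_RInt f a b -> ex_RInt g a b -> RInt (fun x => f x + g x) a b = RInt f a b + RInt g a b.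
Proof. intros. exact (@RInt_plus R_CompleteNormedModule f g a b H H0). Qed.
Lemma RInt_scalR (f : R -> R) a b k : ex_RInt f a b -> RInt (fun x => k * f x) a b = k * RInt f a b.
Proof. intros. exact (@RInt_scal R_CompleteNormedModule f a b k H). Qed.
Lemma RInt_oppR (f : R -> R) a b : ex_RInt f a b -> RInt (fun x => - f x) a b = - RInt f a b.
Proof. intros. exact (@RInt_opp R_CompleteNormedModule f a b H). Qed.
Lemma exR (f : R -> R) a b : (forall z, continuous f z) -> ex_RInt f a b.
Proof. intros H. apply (@ex_RInt_continuous R_CompleteNormedModule). intros; apply H. Qed.

Lemma exR' (f : R -> R) a b : a <= b -> (forall z, a <= z <= b -> continuous f z) -> ex_RInt f a b.
Proof. intros Hab H. apply (@ex_RInt_continuous R_CompleteNormedModule). rewrite Rmin_left, Rmax_right by lra. auto. Qed.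
Ltac toR := match goal with |- ?a = ?b => change (@eq R a b) end.

Lemma main_pos l th x : 0 < l -> 0 < x < PI / 2 ->
  Rabs (l * RInt (fun y => cos (l * y - th) / cos y) 0 x - sin th) < 1 / cos x.
Proof.
  intros Hl [Hx0 Hx1].
  pose proof PI_RGT_0 as HPI.
  assert (Hc : forall t, 0 <= t <= x -> 0 < cos t) by (intros t Ht; apply cos_gt_0; lra).
  set (c := cos x).
  assert (Hc0 : 0 < c) by (apply Hc; lra).
  assert (Hc1 : c < 1) by (pose proof (sin_gt_0 x Hx0 ltac:(lra)); pose proof (cs1 x); fold c in H0; nra).
  set (K := 1 / c - 1).
  assert (HK : 0 < K). { unfold K. assert (1 < 1 / c). { unfold Rdiv; rewrite Rmult_1_l. rewrite <- Rinv_1. apply Rinv_lt_contravar; lra. } lra. }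
  set (S := 2 * l * x / K + 1).
  assert (HS : 0 < S). { unfold S. assert (0 < 2 * l * x / K) by (apply Rdiv_lt_0_compat; nra). lra. }
  assert (HDn : forall t s, 0 <= t <= x -> DD t s <> 0).
  { intros t s Ht. apply Rgt_not_eq, DD_pos, Hc, Ht. }
  assert (HI := ident l th x S ltac:(lra) Hc).
  rewrite (RInt_ext (fun y => cos (l * y - th) / cos y) (fun t => uu l th t 0)).
  2:{ rewrite Rmin_left, Rmax_right by lra. intros t Ht. unfold uu, DD, al, be, ch, sh.
      rewrite Rmult_0_r, Ropp_0, exp_0. pose proof (Hc t ltac:(lra)). match goal with |- ?a = ?b => change (@eq R a b) end. field. lra. }
  assert (Hvc : forall t s, 0 <= t <= x -> continuous (fun s => vv l th t s) s).
  { intros t s Ht. apply (c2d_proj1 (fun S t => vv l th t S)), vv_c2d, HDn; lra. }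
  assert (He : forall s, continuous (fun s => exp (- (l * s))) s).
  { intros s. apply (@ex_derive_continuous R_AbsRing R_NormedModule). auto_derive. auto. }
  assert (Hech : forall s, continuous (fun s => exp (- (l * s)) / ch s) s).
  { intros s. apply (@ex_derive_continuous R_AbsRing R_NormedModule). unfold ch. auto_derive.
    pose proof (ch_pos s). unfold ch in H. lra. }
  set (X1 := RInt (fun t => uu l th t S) 0 x) in *.
  set (X2 := RInt (fun s => vv l th x s) 0 S) in *.
  set (X3 := RInt (fun s => exp (- (l * s)) / ch s) 0 S).
  set (Ie := RInt (fun s => exp (- (l * s))) 0 S).
  set (e := exp (- (l * S))).
  assert (He0 : 0 < e) by apply exp_pos.
  assert (HX3 : RInt (fun s => vv l th 0 s) 0 S = - sin th * X3).
  { unfold X3. rewrite <- RInt_scalR by (apply exR; auto).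
    apply RInt_ext. intros s _. unfold vv, DD, al, be. rewrite cos_0, sin_0, Rmult_0_r, Rminus_0_l, sin_neg.
    pose proof (ch_pos s). match goal with |- ?a = ?b => change (@eq R a b) end. field. lra. }
  assert (HI2 : RInt (fun s => vv l th x s - vv l th 0 s) 0 S = X2 + sin th * X3).
  { rewrite (RInt_minusR (fun s => vv l th x s) (fun s => vv l th 0 s)) by (apply exR; intros; apply Hvc; lra). rewrite HX3. unfold X2. toR. ring. }
  rewrite HI2 in HI.
  assert (HIe : Ie = (1 - e) / l).
  { unfold Ie. apply is_RInt_unique.
    replace ((1 - e) / l) with (minus (- exp (- (l * S)) / l) (- exp (- (l * 0)) / l)).
    2:{ unfold minus, plus, opp; simpl. fold e. rewrite Rmult_0_r, Ropp_0, exp_0. field. lra. }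
    apply (is_RInt_derive (fun s => - exp (- (l * s)) / l)).
    - intros s _. auto_derive. auto. field. lra.
    - intros s _. apply He. }
  assert (HX3Ie : X3 <= Ie).
  { apply RInt_le. lra. apply exR; auto. apply exR; auto.
    intros s _. pose proof (ch_ge1 s). pose proof (exp_pos (- (l * s))).
    unfold Rdiv. rewrite <- (Rmult_1_r (exp (- (l * s)))) at 2. apply Rmult_le_compat_l. lra.
    rewrite <- Rinv_1. apply Rinv_le_contravar; lra. }
  assert (HB1 : Rabs X1 <= (x - 0) * (e * (1 / sh S))).
  { apply abs_RInt_le_const. lra. apply exR'. lra. intros; apply (c2d_proj2 (fun S t => uu l th t S)), uu_c2d, HDn; lra.
    intros t Ht. unfold uu, DD, al, be. apply ptw_u. apply cs1. apply chsh.
    pose proof (sh_ge S HS); lra. apply cs1. left; apply exp_pos. }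
  set (g := fun s => K * exp (- (l * s)) + exp (- (l * s)) / ch s).
  assert (Hg : forall s, continuous g s).
  { intros s. apply (@ex_derive_continuous R_AbsRing R_NormedModule). unfold g, ch. auto_derive.
    pose proof (ch_pos s). unfold ch in H. lra. }
  assert (HG : RInt g 0 S = K * Ie + X3).
  { unfold g. rewrite RInt_plusR. 2: (apply exR; intro z; apply (@ex_derive_continuous R_AbsRing R_NormedModule); auto_derive; auto). 2: (apply exR; auto).
    rewrite RInt_scalR by (apply exR; auto). reflexivity. }
  assert (Hpt : forall s, Rabs (vv l th x s) <= g s).
  { intros s. unfold g. replace (K * exp (- (l * s)) + exp (- (l * s)) / ch s) with (exp (- (l * s)) * ((1 / cos x - 1) + 1 / ch s)) . 2:{ unfold K, c; pose proof (ch_pos s). field. assert (cos x <> 0) by (fold c; lra). split; lra. }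
    unfold vv, DD, al, be. apply ptw_v. fold c; lra. apply cs1. apply chsh. apply ch_ge1.
    rewrite Rplus_comm; apply cs1. left; apply exp_pos. }
  assert (HB2 : Rabs X2 <= K * Ie + X3).
  { rewrite <- HG. apply Rabs_le. split.
    - rewrite <- (RInt_oppR g) by (apply exR; auto). apply RInt_le. lra. apply exR. intros; apply (@continuous_opp R_UniformSpace R_AbsRing R_NormedModule g); auto.
      apply exR; intros; apply Hvc; lra.
      intros s _. pose proof (Hpt s). apply Rabs_le_between in H. lra.
    - apply RInt_le. lra. apply exR; intros; apply Hvc; lra. apply exR; auto.
      intros s _. pose proof (Hpt s). apply Rabs_le_between in H. lra. }
  rewrite HI.
  assert (Hsh := sh_ge S HS).
  assert (Hsh0 : 0 < sh S) by lra.
  assert (HlxK : l * x / sh S < K).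
  { apply (Rmult_lt_reg_r (sh S)); auto. unfold Rdiv. rewrite Rmult_assoc, Rinv_l, Rmult_1_r by lra.
    assert (K * (S / 2) = l * x + K / 2) by (unfold S; field; lra). nra. }
  assert (HA : Rabs (l * X1) < K * e).
  { rewrite Rabs_mult, (Rabs_right l) by lra.
    apply Rle_lt_trans with (l * ((x - 0) * (e * (1 / sh S)))). apply Rmult_le_compat_l; lra.
    replace (l * ((x - 0) * (e * (1 / sh S)))) with ((l * x / sh S) * e) by (field; lra).
    apply Rmult_lt_compat_r; auto. }
  assert (HB : Rabs (l * X2) <= K * (1 - e) + l * X3).
  { rewrite Rabs_mult, (Rabs_right l) by lra.
    apply Rle_trans with (l * (K * Ie + X3)). apply Rmult_le_compat_l; lra.
    rewrite HIe. right. field. lra. }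
  assert (HlX3 : l * X3 <= 1 - e).
  { replace (1 - e) with (l * Ie) by (rewrite HIe; field; lra). apply Rmult_le_compat_l; lra. }
  assert (HC : Rabs (sin th * (l * X3 - 1)) <= 1 - l * X3).
  { rewrite Rabs_mult. rewrite (Rabs_left1 (l * X3 - 1)) by lra.
    pose proof (SIN_bound th). assert (Rabs (sin th) <= 1) by (apply Rabs_le; lra).
    assert (0 <= - (l * X3 - 1)) by lra. nra. }
  replace (l * (X1 + (X2 + sin th * X3)) - sin th) with (l * X1 + l * X2 + sin th * (l * X3 - 1)) by ring.
  assert (H1c : 1 / c = K + 1) by (unfold K; ring).
  rewrite H1c.
  pose proof (Rabs_triang (l * X1 + l * X2) (sin th * (l * X3 - 1))).
  pose proof (Rabs_triang (l * X1) (l * X2)).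
  nra.
Qed.

Theorem corollary2 (lambda theta x : R) (hx0 : 0 < x) (hx1 : x < PI / 2) :
  Rabs (lambda * RInt (fun y => cos (lambda * y - theta) / cos y) 0 x - sin theta)
  < 1 / cos x.
Proof.
  destruct (Rtotal_order lambda 0) as [Hl | [Hl | Hl]].
  - pose proof (main_pos (- lambda) (- theta) x ltac:(lra) (conj hx0 hx1)) as H.
    rewrite (RInt_ext (fun y => cos (- lambda * y - - theta) / cos y) (fun y => cos (lambda * y - theta) / cos y)) in H.
    2:{ intros y _. replace (- lambda * y - - theta) with (- (lambda * y - theta)) by ring. rewrite cos_neg. reflexivity. }
    rewrite sin_neg in H.
    replace (- lambda * RInt (fun y => cos (lambda * y - theta) / cos y) 0 x - - sin theta)
      with (- (lambda * RInt (fun y => cos (lambda * y - theta) / cos y) 0 x - sin theta)) in H by ring.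
    rewrite Rabs_Ropp in H. exact H.
  - subst lambda. rewrite Rmult_0_l, Rminus_0_l, Rabs_Ropp.
    pose proof PI_RGT_0.
    assert (0 < cos x) by (apply cos_gt_0; lra).
    assert (cos x < 1) by (pose proof (sin_gt_0 x hx0 ltac:(lra)); pose proof (cs1 x); nra).
    assert (1 < 1 / cos x). { unfold Rdiv; rewrite Rmult_1_l. rewrite <- Rinv_1. apply Rinv_lt_contravar; lra. }
    pose proof (SIN_bound theta). assert (Rabs (sin theta) <= 1) by (apply Rabs_le; lra). lra.
  - apply main_pos; auto.
Qed.
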